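(* In the $\ell^2$ linear social choice setting (candidates and voters $\ell^2$-normalized), the pure stable lottery rule satisfies $\mathrm{D}(f_{\mathrm{PSLR}})=O(d)$.
   Context: Setting ($\ell^2$ linear social choice). Fix a dimension $d$. An instance consists of $n$ voters and $m$ candidates, each a vector in $\mathbb{R}^d_{\ge 0}$ with Euclidean norm $1$, with every voter vector in $\mathrm{Cone}(C)$ (nonnegative linear combinations of the candidate vectors $C$). Utility $u_v(c)=v^\top c$; voters report consistent rankings (ties arbitrary); $\mathrm{UW}(c)=\sum_v u_v(c)$. A randomized rule outputs a distribution over $C$ based only on the profile. Distortion on an instance: $\max_c\mathrm{UW}(c)/\mathbb{E}_{c\sim f}[\mathrm{UW}(c)]$; $\mathrm{D}(f)$ is the supremum over instances, as a function of $d$. Stable lottery: for a committee $W\subseteq C$ and $c\in C$, $S_c(W)$ is the set of voters ranking $c$ above every member of $W$; a distribution $\mathcal W$ over committees of size $k$ is a stable lottery if $\mathbb{E}_{W\sim\mathcal W}[|S_c(W)|]\le n/k$ for all $c\in C$ (such lotteries exist for every profile). $f_{\mathrm{PSLR}}$: given a stable lottery $\mathcal W$ over committees of size $2d$, choose each $c\in C$ with probability $\frac1{2d}\Pr_{W\sim\mathcal W}[c\in W]$. *)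

(* Defs.v *)
From HB Require Import structures.
From mathcomp Require Import all_boot all_order all_algebra.
From mathcomp Require Import perm.
Set Implicit Arguments. Unset Strict Implicit. Unset Printing Implicit Defensive.
Import Order.TTheory GRing.Theory Num.Theory.
Local Open Scope ring_scope.

Section LinearSocialChoice.
Variable R : realFieldType.

Definition dotv (d : nat) (u v : 'rV[R]_d) : R := \sum_(i < d) u 0 i * v 0 i.

Definition unit_nonneg (d : nat) (u : 'rV[R]_d) : Prop :=
  (forall i, 0 <= u 0 i) /\ dotv u u = 1.

Definition in_cone (d m : nat) (C : 'I_m -> 'rV[R]_d) (v : 'rV[R]_d) : Prop :=
  exists lam : 'I_m -> R, (forall c, 0 <= lam c) /\ v = \sum_(c < m) lam c *: C c.

Definition l2_instance (d n m : nat) (V : 'I_n -> 'rV[R]_d) (C : 'I_m -> 'rV[R]_d) : Prop :=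
  (forall c, unit_nonneg (C c)) /\ (forall v, unit_nonneg (V v)) /\
  (forall v, in_cone C (V v)).

Definition util (d n m : nat) (V : 'I_n -> 'rV[R]_d) (C : 'I_m -> 'rV[R]_d) v c : R :=
  dotv (V v) (C c).

Definition UW (d n m : nat) (V : 'I_n -> 'rV[R]_d) (C : 'I_m -> 'rV[R]_d) (c : 'I_m) : R :=
  \sum_(v < n) util V C v c.

(* A profile: voter v's ranking given as a permutation assigning to each candidate
   its position (0 = top). Consistency: strictly higher utility => ranked strictly higher
   (ties broken arbitrarily). *)
Definition consistent (d n m : nat) (V : 'I_n -> 'rV[R]_d) (C : 'I_m -> 'rV[R]_d)
  (sigma : 'I_n -> {perm 'I_m}) : Prop :=
  forall v c c', util V C v c' < util V C v c -> (sigma v c < sigma v c')%N.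

Definition S_set (n m : nat) (sigma : 'I_n -> {perm 'I_m}) (c : 'I_m) (W : {set 'I_m})
  : {set 'I_n} :=
  [set v | [forall w in W, (sigma v c < sigma v w)%N]].

Definition committee_lottery (m k : nat) (L : {ffun {set 'I_m} -> R}) : Prop :=
  (forall W, 0 <= L W) /\ (\sum_W L W = 1) /\ (forall W, L W != 0 -> #|W| = k).

Definition stable_lottery (n m k : nat) (sigma : 'I_n -> {perm 'I_m})
  (L : {ffun {set 'I_m} -> R}) : Prop :=
  committee_lottery k L /\
  forall c, \sum_W L W * (#|S_set sigma c W|)%:R <= n%:R / k%:R.

Definition pslr_prob (d m : nat) (L : {ffun {set 'I_m} -> R}) (c : 'I_m) : R :=
  (2 * d)%:R^-1 * \sum_(W : {set 'I_m} | c \in W) L W.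

End LinearSocialChoice.

(* Main.v *)
Require Import Defs.
From HB Require Import structures.
From mathcomp Require Import all_boot all_order all_algebra.
From mathcomp Require Import perm.
From mathcomp Require Import reals.
From mathcomp Require Import ring lra.
Import Order.TTheory GRing.Theory Num.Theory.
Local Open Scope ring_scope.

Section Helpers.
Variable R : realType.

Lemma dotv_ge0 d (u v : 'rV[R]_d) : (forall i, 0 <= u 0 i) -> (forall i, 0 <= v 0 i) ->
  0 <= dotv u v.
Proof. move=> hu hv; rewrite /dotv; apply: sumr_ge0 => i _; exact: mulr_ge0. Qed.

Lemma dotv_le1 d (u v : 'rV[R]_d) : unit_nonneg u -> unit_nonneg v -> dotv u v <= 1.
Proof.
case=> _ hu [_ hv].
have h : 0 <= \sum_i (u 0 i - v 0 i) ^+ 2 by apply: sumr_ge0 => i _; exact: sqr_ge0.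
have e : \sum_i (u 0 i - v 0 i) ^+ 2 = dotv u u + dotv v v - 2 * dotv u v.
  rewrite /dotv mulr_sumr -big_split -sumrB /=; apply: eq_bigr => i _; ring.
move: h; rewrite e hu hv; lra.
Qed.

Lemma coord_le1 d (u : 'rV[R]_d) : unit_nonneg u -> forall i, u 0 i <= 1.
Proof.
case=> hu0 hu i.
have : u 0 i * u 0 i <= 1.
  rewrite -hu /dotv (bigD1 i) //= lerDl; apply: sumr_ge0 => j _; exact: mulr_ge0.
have := hu0 i; nra.
Qed.


Lemma stepB d n m (V : 'I_n -> 'rV[R]_d) (C : 'I_m -> 'rV[R]_d) (M : R) :
  l2_instance V C -> (forall a, UW V C a <= M) -> 0 <= M -> n%:R <= d%:R * M.
Proof.
case=> hC [hV hcone] hM M0.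
have hc' : forall v, exists lam : 'I_m -> R,
    (forall c, 0 <= lam c) /\ V v = \sum_(c < m) lam c *: C c by move=> v; exact: hcone v.
have [lam hlam] := fin_all_exists hc'.
pose mu c := \sum_v lam v c.
have mu0 : forall c, 0 <= mu c by move=> c; apply: sumr_ge0 => v _; case: (hlam v).
have Vj : forall v j, V v 0 j = \sum_c lam v c * C c 0 j.
  move=> v j; case: (hlam v) => _ ->; rewrite summxE; apply: eq_bigr => c _; by rewrite mxE.
pose s j := \sum_v V v 0 j.
have sE : forall j, s j = \sum_c mu c * C c 0 j.
  move=> j; rewrite /s (eq_bigr _ (fun v _ => Vj v j)) exchange_big /=.
  by apply: eq_bigr => c _; rewrite /mu mulr_suml.
have UWE : forall a, UW V C a = \sum_j s j * C a 0 j.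
  move=> a; rewrite /UW /util /dotv exchange_big /=; apply: eq_bigr => j _.
  by rewrite /s mulr_suml.
have Cge0 : forall c j, 0 <= C c 0 j by move=> c j; case: (hC c).
have s0 : forall j, 0 <= s j by move=> j; rewrite sE; apply: sumr_ge0 => c _; exact: mulr_ge0.
have h1 : n%:R <= \sum_c mu c.
  have hv : forall v, 1 <= \sum_c lam v c.
    move=> v; case: (hV v) => _ <-.
    have -> : dotv (V v) (V v) = \sum_c lam v c * dotv (V v) (C c).
      rewrite /dotv; transitivity (\sum_(i < d) \sum_c V v 0 i * (lam v c * C c 0 i)).
        by apply: eq_bigr => i _; rewrite -mulr_sumr -Vj.
      rewrite exchange_big /=; apply: eq_bigr => c _; rewrite mulr_sumr.
      by apply: eq_bigr => j _; ring.
    apply: ler_sum => c _; rewrite -[X in _ <= X]mulr1; apply: ler_wpM2l.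
      by case: (hlam v).
    exact: dotv_le1.
  rewrite /mu exchange_big /= -[n in n%:R]card_ord -sumr_const.
  by apply: ler_sum => v _; exact: hv.
pose G j := \sum_c mu c * (C c 0 j * C c 0 j).
have h2 : \sum_c mu c = \sum_j G j.
  rewrite /G [RHS]exchange_big /=; apply: eq_bigr => c _.
  by rewrite -mulr_sumr; case: (hC c) => _; rewrite /dotv => ->; rewrite mulr1.
have h3 : forall j, G j <= M.
  move=> j.
  have GS : G j <= s j.
    rewrite sE; apply: ler_sum => c _; rewrite mulrA ler_piMr //.
      by apply: mulr_ge0.
    exact: coord_le1.
  have key : s j * G j <= M * s j.
    rewrite {2}sE mulr_sumr /G mulr_sumr.
    apply: ler_sum => c _.
    have : s j * C c 0 j <= M.
      apply: le_trans (hM c); rewrite UWE (bigD1 j) //= lerDl.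
      by apply: sumr_ge0 => i _; apply: mulr_ge0.
    move=> h.
    have -> : s j * (mu c * (C c 0 j * C c 0 j)) = (mu c * C c 0 j) * (s j * C c 0 j) by ring.
    rewrite [M * _]mulrC; apply: ler_wpM2l => //; exact: mulr_ge0.
  have [sj0|sjp] := eqVneq (s j) 0.
    by apply: le_trans GS _; rewrite sj0.
  have sjp' : 0 < s j by rewrite lt_def sjp s0.
  by rewrite -(ler_pM2l sjp') [s j * M]mulrC.
apply: le_trans h1 _; rewrite h2.
apply: le_trans (ler_sum _ (fun j _ => h3 j)) _.
by rewrite sumr_const card_ord mulr_natl.
Qed.


Lemma util_ge0 d n m (V : 'I_n -> 'rV[R]_d) (C : 'I_m -> 'rV[R]_d) v c :
  l2_instance V C -> 0 <= util V C v c.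
Proof.
case=> hC [hV _]; apply: dotv_ge0; [by case: (hV v) | by case: (hC c)].
Qed.

Lemma util_le1 d n m (V : 'I_n -> 'rV[R]_d) (C : 'I_m -> 'rV[R]_d) v c :
  l2_instance V C -> util V C v c <= 1.
Proof. rewrite /util; case=> hC [hV _]; exact: (@dotv_le1 _ _ _ (hV v) (hC c)). Qed.

Lemma stepA_W d n m (V : 'I_n -> 'rV[R]_d) (C : 'I_m -> 'rV[R]_d) (sigma : 'I_n -> {perm 'I_m}) a (W : {set 'I_m}) :
  l2_instance V C -> consistent V C sigma ->
  UW V C a <= \sum_(w in W) UW V C w + #|S_set sigma a W|%:R.
Proof.
move=> hI hcons.
have per : forall v, util V C v a <=
    \sum_(w in W) util V C v w + (v \in S_set sigma a W)%:R.
  move=> v; case: (boolP (v \in S_set sigma a W)) => hv.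
    have := @util_le1 _ _ _ V C v a hI.
    have : 0 <= \sum_(w in W) util V C v w by apply: sumr_ge0 => w _; exact: (@util_ge0 _ _ _ V C _ _ hI).
    rewrite /=; lra.
  move: hv; rewrite inE negb_forall => /existsP [w]; rewrite negb_imply => /andP [wW hlt].
  have hw : util V C v a <= util V C v w.
    rewrite leNgt; apply/negP => h; move: (hcons v a w h); by rewrite (negbTE hlt).
  rewrite /= addr0 (bigD1 w) //=; apply: le_trans hw _; rewrite lerDl.
  by apply: sumr_ge0 => w' _; exact: (@util_ge0 _ _ _ V C _ _ hI).
rewrite /UW; apply: le_trans (ler_sum _ (fun v _ => per v)) _.
rewrite big_split /= exchange_big /= lerD //.
have -> : \sum_v (v \in S_set sigma a W)%:R = \sum_(v in S_set sigma a W) (1 : R).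
  by rewrite [RHS]big_mkcond; apply: eq_bigr => v _; case: (v \in _).
by rewrite sumr_const.
Qed.

End Helpers.

Theorem theorem18 (R : realType) :
  exists K : R, forall (d n m : nat) (V : 'I_n -> 'rV[R]_d) (C : 'I_m -> 'rV[R]_d)
    (sigma : 'I_n -> {perm 'I_m}) (L : {ffun {set 'I_m} -> R}),
    l2_instance V C ->
    consistent V C sigma ->
    stable_lottery (2 * d) sigma L ->
    forall c : 'I_m,
      UW V C c <= K * d%:R * \sum_(c' < m) pslr_prob d L c' * UW V C c'.
Proof.
exists 4 => d n m V C sigma L hI hcons [[L0 [L1 Lk]] hst] c.
have dpos : (0 < d)%N.
  case: d V C hI {hcons hst Lk} => [|d'] // V C [hC _].
  by case: (hC c) => _; rewrite /dotv big_ord0 => /eqP; rewrite eq_sym oner_eq0.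
set T := \sum_W L W * \sum_(w in W) UW V C w.
have UW0 : forall a, 0 <= UW V C a.
  by move=> a; apply: sumr_ge0 => v _; exact: (@util_ge0 R d n m V C v a hI).
have T0 : 0 <= T.
  by apply: sumr_ge0 => W _; apply: mulr_ge0 => //; apply: sumr_ge0.
have D0 : 0 < d%:R :> R by rewrite ltr0n.
have stepA : forall a, UW V C a <= T + n%:R / (2 * d)%:R.
  move=> a.
  have -> : UW V C a = \sum_W L W * UW V C a by rewrite -mulr_suml L1 mul1r.
  apply: le_trans (_ : \sum_W L W * (\sum_(w in W) UW V C w + #|S_set sigma a W|%:R) <= _).
    apply: ler_sum => W _; apply: ler_wpM2l => //; exact: (@stepA_W R d n m V C sigma a W hI hcons).
  under eq_bigr do rewrite mulrDr.
  by rewrite big_split /= lerD2l; exact: hst.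
have EE : \sum_(c' < m) pslr_prob d L c' * UW V C c' = (2 * d)%:R^-1 * T.
  rewrite /pslr_prob /T mulr_sumr.
  transitivity (\sum_(c' < m) \sum_(W : {set 'I_m})
      (if c' \in W then (2 * d)%:R^-1 * L W * UW V C c' else 0)).
    apply: eq_bigr => c' _; rewrite -mulrA mulr_suml mulr_sumr big_mkcond /=.
    by apply: eq_bigr => W _; case: (c' \in W) => //=; rewrite ?mul0r // mulrA.
  rewrite exchange_big /=; apply: eq_bigr => W _.
  rewrite -big_mkcond /= !mulr_sumr; apply: eq_bigr => w _; by rewrite mulrA.
have M0 : 0 <= T + n%:R / (2 * d)%:R.
  by apply: addr_ge0 => //; apply: divr_ge0.
have hB := @stepB R d n m V C _ hI stepA M0.
have hc := stepA c.
rewrite EE natrM in hc hB *.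
set D := d%:R in D0 hc hB *.
set x := n%:R in hc hB *.
have e1 : D * (T + x / (2 * D)) = D * T + x / 2 by field; lra.
have e2 : 4 * D * ((2 * D)^-1 * T) = 2 * T by field; lra.
have hx : x / (2 * D) <= T.
  rewrite ler_pdivrMr; last lra.
  move: hB; rewrite e1; nra.
rewrite e2; lra.
Qed.
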